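(* Let $k\ge 3$, $n_1,\dots,n_k\ge 2$ and $r\in[k]$. The LC orbit of the clique-star $CS^r_{n_1,\dots,n_k}$ has size $$|\mathcal{O}(CS^r_{n_1,\dots,n_k})|=\sum_{\substack{I\subseteq[k]\\ |I|\text{ odd}}}\prod_{i\in I}n_i+\sum_{j=1}^k\prod_{i\in[k]\setminus\{j\}}(n_i+1).$$
   Context: $[k]=\{1,\dots,k\}$. The clique-star $CS^r_{n_1,\dots,n_k}$ has vertex set $U_1\sqcup\cdots\sqcup U_k$ with $|U_i|=n_i$; each $U_i$ is a clique, every vertex of $U_r$ is adjacent to every vertex of $U_i$ for all $i\ne r$, and there are no edges between $U_i$ and $U_l$ for distinct $i,l\ne r$. The local complement $c_v(G)$ complements the edges among the neighbours of $v$. $\mathcal{O}(G)$ is the set of all graphs on the labelled vertex set $V(G)$ obtainable from $G$ by finite sequences of local complements (labelled graphs are counted). *)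

(* Defs.v *)
From mathcomp Require Import all_boot.
Set Implicit Arguments. Unset Strict Implicit. Unset Printing Implicit Defensive.

(* A simple graph on a finite labelled vertex set V is represented by its set
   of ordered adjacent pairs (symmetric, irreflexive). *)
Definition graph (V : finType) := {set V * V}.

Definition nbhd (V : finType) (G : graph V) (v : V) : {set V} :=
  [set u | (v, u) \in G].

Definition local_compl (V : finType) (v : V) (G : graph V) : graph V :=
  [set e | (e \in G) (+) [&& e.1 \in nbhd G v, e.2 \in nbhd G v & e.1 != e.2]].

Definition lc_step (V : finType) : rel (graph V) :=
  fun G H => [exists v, H == local_compl v G].

Definition lc_orbit (V : finType) (G : graph V) : {set graph V} :=
  [set H | connect (@lc_step V) G H].

(* Vertex set U_1 ⊔ ... ⊔ U_k with |U_i| = n i (indices 0..k-1). *)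
Definition cs_vertex (k : nat) (n : 'I_k -> nat) := {i : 'I_k & 'I_(n i)}.

Definition clique_star (k : nat) (n : 'I_k -> nat) (r : 'I_k)
  : graph (cs_vertex n) :=
  [set e | (e.1 != e.2) &&
     [|| tag e.1 == tag e.2, tag e.1 == r | tag e.2 == r]].

(* Main.v *)
Require Import Defs.
From mathcomp Require Import all_boot.
From mathcomp Require Import zify.
Set Implicit Arguments. Unset Strict Implicit. Unset Printing Implicit Defensive.

Section LC.
Variables (k : nat) (n : 'I_k -> nat).
Local Notation V := (cs_vertex n).

Definition fn := {ffun 'I_k -> option V}.
Definition fvalid (f : fn) := [forall i, if f i is Some u then tag u == i else true].
Definition hasc (f : fn) i := f i != None.
Definition isc (f : fn) (u : V) := f (tag u) == Some u.
Definition fr (f : fn) u := ~~ hasc f (tag u) || isc f u.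
Definition qadj (Q : option 'I_k) (a c : 'I_k) :=
  if Q is Some q then (a == q) || (c == q) else true.
Definition intra (f : fn) (b : {ffun 'I_k -> bool}) (x y : V) :=
  if hasc f (tag x) then isc f x || isc f y else ~~ b (tag x).
Definition gadj Q f b (x y : V) :=
  (x != y) && (if tag x == tag y then intra f b x y
               else [&& fr f x, fr f y & qadj Q (tag x) (tag y)]).
Definition G Q f b : graph V := [set e | gadj Q f b e.1 e.2].

Definition lcQ (Q : option 'I_k) j :=
  match Q with None => Some j | Some q => if q == j then None else Some q end.
Definition stepf (f : fn) (b : {ffun 'I_k -> bool}) (v : V) : fn :=
  [ffun i => if i == tag v then
     (if hasc f (tag v) then None else if b (tag v) then None else Some v)
   else f i].
Definition stepb Q (f : fn) (b : {ffun 'I_k -> bool}) (v : V) : {ffun 'I_k -> bool} :=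
  [ffun i => if i == tag v then b i && ~~ hasc f i else b i (+) qadj Q i (tag v)].

Lemma qadjC Q a c : qadj Q a c = qadj Q c a.
Proof. by case: Q => //= q; rewrite orbC. Qed.

Lemma qadj_lc Q j a c : a != j -> c != j -> a != c ->
  qadj (lcQ Q j) a c = qadj Q a c (+) (qadj Q j a && qadj Q j c).
Proof.
case: Q => [q|] /= aj cj ac; last by rewrite (negbTE aj) (negbTE cj).
case: (eqVneq q j) => [->|qj] /=; first by rewrite (negbTE aj) (negbTE cj).
case: (eqVneq a q) => [E|aq] /=; case: (eqVneq c q) => [E'|cq] //=.
all: try by rewrite ?(negbTE qj) ?eqxx ?addbF.
by move: ac; rewrite E E' eqxx.
Qed.

Lemma qadj_lcJ Q j a : a != j -> qadj (lcQ Q j) j a = qadj Q j a.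
Proof.
case: Q => [q|] aj /=; last by rewrite eqxx.
by case: (eqVneq q j) => [->|qj] /=; rewrite ?eqxx // eq_sym (negbTE qj).
Qed.

Variables (f : fn) (b : {ffun 'I_k -> bool}) (Q : option 'I_k).

Lemma isc_hasc u : isc f u -> hasc f (tag u).
Proof. by rewrite /isc /hasc => /eqP ->. Qed.

Lemma isc_same x y : tag x = tag y -> isc f x -> isc f y = (y == x).
Proof.
rewrite /isc => <- /eqP ->; apply/idP/idP; first by case/eqP => ->.
by move/eqP->.
Qed.

Lemma Nv v u : fr f v -> gadj Q f b v u =
  (v != u) && (if tag v == tag u then hasc f (tag v) || ~~ b (tag v)
               else fr f u && qadj Q (tag v) (tag u)).
Proof.
move=> frv; rewrite /gadj /intra.
case: eqP => // _; move: frv; rewrite /fr.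
by case: (hasc f (tag v)) => //= ->.
Qed.


Section Step.
Variable v : V.
Hypothesis frv : fr f v.
Local Notation f' := (stepf f b v).
Local Notation b' := (stepb Q f b v).

Lemma iscJ (u : V) : tag u = tag v -> isc f u = hasc f (tag v) && (u == v).
Proof.
move=> E; move: frv; rewrite /fr /isc /hasc E.
case: (f (tag v)) => [w|] //= /eqP [->]; exact: (eq_sym (Some v) (Some u)).
Qed.

Lemma frJ (u : V) : tag u = tag v -> fr f u = ~~ hasc f (tag v) || (u == v).
Proof. by move=> E; rewrite /fr iscJ // E; case: (hasc f (tag v)). Qed.

Lemma hasc'J (u : V) : tag u = tag v -> hasc f' (tag u) = ~~ hasc f (tag v) && ~~ b (tag v).
Proof.
move=> E; rewrite /hasc ffunE E eqxx /hasc.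
by case: (f (tag v)); case: (b (tag v)).
Qed.

Lemma isc'J (u : V) : tag u = tag v -> isc f' u = ~~ hasc f (tag v) && ~~ b (tag v) && (u == v).
Proof.
move=> E; rewrite /isc ffunE E eqxx.
case: (hasc f (tag v)); case: (b (tag v)) => //=.
exact: (eq_sym (Some v) (Some u)).
Qed.

Lemma fr'J (u : V) : tag u = tag v -> fr f' u = [|| hasc f (tag v), b (tag v) | u == v].
Proof.
move=> E; rewrite /fr hasc'J // isc'J //.
by case: (hasc f (tag v)); case: (b (tag v)).
Qed.

Lemma b'J (u : V) : tag u = tag v -> b' (tag u) = b (tag v) && ~~ hasc f (tag v).
Proof. by move=> E; rewrite ffunE E eqxx. Qed.

Lemma hasc'N (u : V) : tag u != tag v -> hasc f' (tag u) = hasc f (tag u).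
Proof. by move=> E; rewrite /hasc ffunE (negbTE E). Qed.

Lemma isc'N (u : V) : tag u != tag v -> isc f' u = isc f u.
Proof. by move=> E; rewrite /isc ffunE (negbTE E). Qed.

Lemma fr'N (u : V) : tag u != tag v -> fr f' u = fr f u.
Proof. by move=> E; rewrite /fr hasc'N // isc'N. Qed.

Lemma b'N (u : V) : tag u != tag v -> b' (tag u) = b (tag u) (+) qadj Q (tag v) (tag u).
Proof. by move=> E; rewrite ffunE (negbTE E) qadjC. Qed.


Lemma LC_fr : local_compl v (G Q f b) = G (lcQ Q (tag v)) f' b'.
Proof.
apply/setP => -[x y]; rewrite /local_compl /G /nbhd !inE /= [gadj _ _ _ v x]Nv // [gadj _ _ _ v y]Nv // /gadj /intra.
case: (eqVneq x y) => [<-|xy]; first by rewrite !eqxx /= !andbF.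
rewrite /= ![v == _]eq_sym.
case: (eqVneq (tag x) (tag v)) => Ex; case: (eqVneq (tag y) (tag v)) => Ey.
- rewrite Ex Ey eqxx (iscJ Ex) (iscJ Ey) (hasc'J (erefl (tag v))) (b'J (erefl (tag v))).
  rewrite (isc'J Ex) (isc'J Ey).
  case: (eqVneq x v) => [Exv|xv]; case: (eqVneq y v) => [Eyv|yv] /=;
   first (by move: xy; rewrite Exv Eyv eqxx); rewrite ?andbT ?andbF;
   by case: (hasc f (tag v)); case: (b (tag v)).
- rewrite Ex eq_sym (negbTE Ey) (frJ Ex) (fr'J Ex) (fr'N Ey) (qadj_lcJ _ Ey).
  case: (fr f y); case: (qadj Q (tag v) (tag y)); rewrite /= ?andbF ?andbT //.
  have -> : y != v by apply: contraNneq Ey => ->.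
  by case: (x == v); case: (hasc f (tag v)); case: (b (tag v)).
- rewrite Ey (negbTE Ex) (frJ Ey) (fr'J Ey) (fr'N Ex) [qadj (lcQ _ _) _ _]qadjC (qadj_lcJ _ Ex) [qadj Q (tag x) (tag v)]qadjC.
  case: (fr f x); case: (qadj Q (tag v) (tag x)); rewrite /= ?andbF ?andbT //.
  have -> : x != v by apply: contraNneq Ex => ->.
  by case: (y == v); case: (hasc f (tag v)); case: (b (tag v)).
- have -> : x != v by apply: contraNneq Ex => ->.
  have -> : y != v by apply: contraNneq Ey => ->.
  case: (eqVneq (tag x) (tag y)) => Exy.
  + rewrite (hasc'N Ex) (isc'N Ex) (isc'N Ey) (b'N Ex) /fr -Exy.
    case Ix: (isc f x).
      have hx := isc_hasc Ix; have sxy := isc_same Exy Ix.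
      by rewrite hx sxy eq_sym (negbTE xy) /= ?andbF.
    case Iy: (isc f y).
      have hy := isc_hasc Iy; rewrite -Exy in hy.
      by rewrite hy /= ?andbF.
    by case: (hasc f (tag x)); case: (b (tag x)); case: (qadj Q (tag v) (tag x)).
  + rewrite (fr'N Ex) (fr'N Ey) (qadj_lc _ Ex Ey Exy).
    by case: (fr f x); case: (fr f y); case: (qadj Q (tag x) (tag y));
      case: (qadj Q (tag v) (tag x)); case: (qadj Q (tag v) (tag y)).
Qed.
End Step.

Lemma LC_nfr v : ~~ fr f v -> local_compl v (G Q f b) = G Q f b.
Proof.
rewrite /fr negb_or negbK => /andP [hv iv].
have key u : gadj Q f b v u -> tag u = tag v /\ isc f u.
  rewrite /gadj /intra /fr hv (negbTE iv) /= => /andP [_].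
  by case: (eqVneq (tag v) (tag u)) => [->|].
apply/setP => -[x y]; rewrite /local_compl /G /nbhd !inE /=.
case Hx: (gadj Q f b v x) => /=; last by rewrite addbF.
case Hy: (gadj Q f b v y) => /=; last by rewrite addbF.
case: (key _ Hx) => Ex Ix; case: (key _ Hy) => Ey Iy.
rewrite (isc_same (etrans Ex (esym Ey)) Ix) in Iy.
by rewrite (eqP Iy) eqxx /= addbF.
Qed.

End LC.

Definition state k (n : 'I_k -> nat) := (option 'I_k * fn n * {ffun 'I_k -> bool})%type.
Definition Gs k (n : 'I_k -> nat) (s : state n) := G s.1.1 s.1.2 s.2.
Definition step k (n : 'I_k -> nat) (s : state n) (v : cs_vertex n) : state n :=
  if fr s.1.2 v then (lcQ s.1.1 (tag v), stepf s.1.2 s.2 v, stepb s.1.1 s.1.2 s.2 v)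
  else s.

Lemma LC_step k (n : 'I_k -> nat) (s : state n) v :
  local_compl v (Gs s) = Gs (step s v).
Proof.
case: s => [[Q f] b]; rewrite /Gs /step /=.
case: ifP => H; [exact: LC_fr | by rewrite LC_nfr ?H].
Qed.

Lemma lc_invol (V : finType) (H : graph V) v : (v, v) \notin H ->
  local_compl v (local_compl v H) = H.
Proof.
move=> vv; have Nv : nbhd (local_compl v H) v = nbhd H v.
  apply/setP => u; rewrite /nbhd !inE /=.
  by rewrite (negbTE vv) /= addbF.
apply/setP => e; rewrite /local_compl inE Nv inE.
by rewrite -addbA addbb addbF.
Qed.

Lemma Gs_irr k (n : 'I_k -> nat) (s : state n) v : (v, v) \notin Gs s.
Proof. by rewrite inE /gadj eqxx. Qed.

Lemma fwd_step k (n : 'I_k -> nat) (s : state n) v : lc_step (Gs s) (Gs (step s v)).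
Proof. by apply/existsP; exists v; rewrite LC_step. Qed.

Lemma rev_step k (n : 'I_k -> nat) (s : state n) v : lc_step (Gs (step s v)) (Gs s).
Proof.
apply/existsP; exists v; rewrite -LC_step lc_invol //; exact: Gs_irr.
Qed.


Section Inv.
Variables (k : nat) (n : 'I_k -> nat).
Local Notation V := (cs_vertex n).

Definition nc (f : fn n) := #|[set i | hasc f i]|.
Definition canon (Q : option 'I_k) (f : fn n) i :=
  if Q is Some j then (i == j) && odd (nc f) else true.
Definition valid (Q : option 'I_k) (f : fn n) :=
  fvalid f && (if Q is Some j then f j == None else odd (nc f)).
Definition Pst (s : state n) :=
  valid s.1.1 s.1.2 && [forall i, (s.1.2 i == None) ==> (s.2 i == canon s.1.1 s.1.2 i)].

Lemma nc_step (f : fn n) b (v : V) : fr f v ->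
  odd (nc (stepf f b v)) = odd (nc f) (+) (hasc f (tag v) || ~~ b (tag v)).
Proof.
move=> frv; rewrite /nc.
set S := [set i | hasc f i].
have hS : (tag v \in S) = hasc f (tag v) by rewrite inE.
case hJ: (hasc f (tag v)).
  have -> : [set i | hasc (stepf f b v) i] = S :\ tag v.
    apply/setP => i; rewrite !inE /hasc ffunE.
    by case: (eqVneq i (tag v)) => [->|] //=; rewrite hJ.
  by rewrite (cardsD1 (tag v) S) hS hJ /= addbT; case: (odd _).
case bJ: (b (tag v)).
  have -> : [set i | hasc (stepf f b v) i] = S.
    apply/setP => i; rewrite !inE /hasc ffunE.
    case: (eqVneq i (tag v)) => [->|] //=; rewrite hJ bJ.
    by rewrite -/(hasc f (tag v)) hJ.
  by rewrite /= addbF.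
have -> : [set i | hasc (stepf f b v) i] = tag v |: S.
  apply/setP => i; rewrite !inE /hasc ffunE.
  by case: (eqVneq i (tag v)) => [->|] //=; rewrite hJ bJ.
by rewrite cardsU1 hS hJ /= addbT.
Qed.

Lemma P_step (s : state n) v : Pst s -> Pst (step s v).
Proof.
case: s => [[Q f] b]; rewrite /step /=; case: ifP => frv //.
rewrite /Pst /valid /= => /andP [/andP [fv vQ] /forallP cb].
have ncs := nc_step b frv.
set j := tag v in ncs *.
have cbJ : ~~ hasc f j -> b j = canon Q f j.
  by move=> hJ; move: (cb j); rewrite /hasc in hJ; rewrite negbK in hJ; rewrite hJ => /eqP.
have fv' : fvalid (stepf f b v).
  apply/forallP => i; rewrite ffunE; case: (eqVneq i j) => [->|ij].
    by case: (hasc f j) => //; case: (b j).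
  exact: (forallP fv i).
rewrite fv' /=; apply/andP; split.
  case: Q vQ cb cbJ => [q|] /= vQ cb cbJ; last first.
    rewrite ffunE eqxx; case hJ: (hasc f j) => //=.
    by rewrite cbJ ?hJ.
  case: (eqVneq q j) => [qj|qj] /=; last by rewrite ffunE (negbTE qj).
  rewrite ncs; rewrite -qj in cbJ *; rewrite /hasc vQ /= cbJ /hasc ?vQ //=.
  by rewrite eqxx /=; case: (odd (nc f)).
apply/forallP => i; rewrite !ffunE.
case: (eqVneq i j) => [->|ij].
  rewrite -/j.
  case: Q vQ cb cbJ => [q|] /= vQ cb cbJ.
    case: (eqVneq q j) => [qj|qj] /=.
      have hJ : hasc f j = false by rewrite /hasc -qj vQ.
      by rewrite hJ; case: (b j).
    rewrite [j == q]eq_sym (negbTE qj) /=.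
    case hJ: (hasc f j); first by rewrite andbF.
    by rewrite cbJ ?hJ //= /canon [j == q]eq_sym (negbTE qj).
  rewrite /canon /= eqxx ncs vQ /=.
  by case: (b j); case: (hasc f j).
rewrite -/j; apply/implyP => fi.
have bi := eqP (implyP (cb i) fi).
case: Q vQ cb cbJ bi => [q|] /= vQ cb cbJ bi.
  case: (eqVneq q j) => [qj|qj] /=.
    by rewrite bi /canon qj (negbTE ij) eqxx /=.
  rewrite bi orbF.
  case: (eqVneq i q) => [iq|iq] //=.
  rewrite ncs; case hJ: (hasc f j) => /=; first by rewrite addbT.
  by rewrite cbJ ?hJ // [j == q]eq_sym (negbTE qj).
by rewrite bi (negbTE ij).
Qed.

End Inv.

Section Reach.
Variables (k : nat) (n : 'I_k -> nat).
Hypothesis hn : forall i, 0 < n i.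
Local Notation V := (cs_vertex n).

Definition v0 (i : 'I_k) : V := Tagged (fun i => 'I_(n i)) (Ordinal (hn i)).
Definition f0 : fn n := [ffun => None].
Definition b0 : {ffun 'I_k -> bool} := [ffun => false].
Definition start (j : 'I_k) : state n := (Some j, f0, b0).

Lemma nc_f0 : nc f0 = 0.
Proof.
rewrite /nc; apply/eqP; rewrite cards_eq0; apply/eqP/setP => i.
by rewrite !inE /hasc ffunE.
Qed.

Lemma P_start j : Pst (start j).
Proof.
rewrite /Pst /valid /= ffunE eqxx andbT; apply/andP; split.
  by apply/forallP => i; rewrite ffunE.
by apply/forallP => i; rewrite !ffunE /canon nc_f0 andbF.
Qed.

Lemma nc_dec (f : fn n) b (v : V) : hasc f (tag v) ->
  (nc (stepf f b v)).+1 = nc f.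
Proof.
move=> hJ; rewrite /nc.
have -> : [set i | hasc (stepf f b v) i] = [set i | hasc f i] :\ tag v.
  apply/setP => i; rewrite !inE /hasc ffunE.
  by case: (eqVneq i (tag v)) => [->|] //=; rewrite hJ.
by rewrite [in RHS](cardsD1 (tag v)) inE hJ.
Qed.

Lemma center_of (f : fn n) i : fvalid f -> hasc f i ->
  exists c : V, [/\ tag c = i, f i = Some c & fr f c].
Proof.
move=> /forallP /(_ i) fv; rewrite /hasc; case E: (f i) fv => [c|] //= /eqP tc _.
exists c; split => //; rewrite /fr /isc tc E eqxx orbT //.
Qed.

Lemma reachA j m (s : state n) : Pst s -> s.1.1 = Some j -> nc s.1.2 = m ->
  connect (@lc_step V) (Gs (start j)) (Gs s).
Proof.
elim: m s => [|m IH] [[Q f] b] /= Ps EQ Nc; subst Q.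
  have fN i : f i = None.
    move: Nc; rewrite /nc => /eqP; rewrite cards_eq0 => /eqP /setP /(_ i).
    by rewrite !inE /hasc; case: (f i).
  have -> : f = f0 by apply/ffunP => i; rewrite fN ffunE.
  have -> : b = b0.
    apply/ffunP => i; move: Ps => /andP [_ /forallP /(_ i)].
    by rewrite /= fN eqxx /= /canon Nc andbF ffunE => /eqP.
  exact: connect0.
have [i iS] : exists i, i \in [set i | hasc f i].
  by apply/set0Pn; rewrite -card_gt0 -/(nc f) Nc.
rewrite inE in iS.
move: (Ps) => /andP [/andP [fv vQ] _].
have [c [tc fc frc]] := center_of fv iS.
have ij : i != j by apply: contraTneq iS => ->; rewrite /hasc; move: vQ => /= ->.
have Ps' := P_step c Ps.
apply: connect_trans (connect1 (rev_step _ c)).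
apply: (IH _ Ps'); rewrite /step /= frc /=.
  by rewrite tc eq_sym (negbTE ij).
by apply/eq_add_S; rewrite nc_dec ?tc.
Qed.

Lemma reachB r j : connect (@lc_step V) (Gs (start r)) (Gs (start j)).
Proof.
case: (eqVneq j r) => [->|jr]; first exact: connect0.
set s0 := start j; set s1 := step s0 (v0 j); set s2 := step s1 (v0 r).
have fr1 : fr s0.1.2 (v0 j) by rewrite /fr /hasc ffunE.
have Q1 : s1.1.1 = None by rewrite /s1 /step fr1 /= eqxx.
have fr2 : fr s1.1.2 (v0 r).
  rewrite /s1 /step fr1 /fr /hasc /= ffunE /=; case: (eqVneq r j) => [E|_]; first by move: jr; rewrite E eqxx.
  by rewrite ffunE.
have Q2 : s2.1.1 = Some r by rewrite /s2 /step fr2 Q1.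
have P2 : Pst s2 by apply: P_step; apply: P_step; apply: P_start.
apply: connect_trans (reachA P2 Q2 (erefl _)) _.
apply: connect_trans (connect1 (rev_step _ (v0 r))) _.
exact: connect1 (rev_step _ (v0 j)).
Qed.

Lemma reachC r (s : state n) : Pst s -> connect (@lc_step V) (Gs (start r)) (Gs s).
Proof.
have HS j (t : state n) : Pst t -> t.1.1 = Some j -> connect (@lc_step V) (Gs (start r)) (Gs t).
  move=> Pt Qt; apply: connect_trans (reachB r j) (reachA Pt Qt (erefl _)).
case: s => [[[j|] f] b] Ps; first exact: HS Ps (erefl _).
move: (Ps) => /andP [/andP [fv vQ] _].
have [i iS] : exists i, i \in [set i | hasc f i].
  by apply/set0Pn; rewrite -card_gt0 -/(nc f); move: vQ => /=; case: (nc f).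
rewrite inE in iS.
have [c [tc fc frc]] := center_of fv iS.
apply: connect_trans (connect1 (rev_step _ c)).
apply: (HS i _ (P_step c Ps)).
by rewrite /step /= frc /= tc.
Qed.

End Reach.


Lemma sum_option (T : finType) (F : option T -> nat) :
  \sum_(o : option T) F o = F None + \sum_(t : T) F (Some t).
Proof.
rewrite [LHS](bigD1 None) //=; congr (_ + _).
rewrite (reindex_omap Some (fun o => o)) //=.
  by apply: eq_bigl => t; rewrite eqxx.
by case.
Qed.

Lemma card_as_sum (T : finType) (P : pred T) : #|P| = \sum_(t : T) (P t : nat).
Proof.
rewrite -sum1_card big_mkcond /=; apply: eq_bigr => t _.
by rewrite -topredE /=; case: (P t).
Qed.

Section Count.
Variables (k : nat) (n : 'I_k -> nat).
Local Notation V := (cs_vertex n).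

Lemma card_cls i : #|[pred u : V | tag u == i]| = n i.
Proof.
have -> : #|[pred u : V | tag u == i]| = #|[set Tagged (fun i => 'I_(n i)) x | x : 'I_(n i)]|.
  apply: eq_card => u; rewrite !inE; apply/idP/imsetP => [/eqP <-|[x _ ->]] //=.
  by exists (tagged u) => //; rewrite -[LHS]/(u); case: u.
rewrite card_imset ?card_ord // => x y /eqP; rewrite eq_Tagged /= => /eqP.
done.
Qed.

Lemma card_optpred (P : pred V) (c : bool) :
  #|[pred o : option V | if o is Some u then P u else c]| = c + #|P|.
Proof. by rewrite !card_as_sum sum_option. Qed.

Lemma card_fam (F : 'I_k -> pred (option V)) :
  #|[pred f : fn n | [forall i, f i \in F i]]| = \prod_i #|F i|.
Proof.
have -> : \prod_i #|F i| = foldr muln 1 [seq #|F x| | x : 'I_k].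
  by rewrite foldrE big_map big_enum.
rewrite -(card_family F); apply: eq_card => f; rewrite !inE.
by [].
Qed.

Lemma count_star j :
  #|[set f : fn n | fvalid f && (f j == None)]| = \prod_(i | i != j) (n i).+1.
Proof.
pose F i := [pred o : option V | if o is Some u then (i != j) && (tag u == i) else true].
have -> : #|[set f : fn n | fvalid f && (f j == None)]| = #|[pred f : fn n | [forall i, f i \in F i]]|.
  apply: eq_card => f; rewrite !inE; apply/andP/forallP => [[/forallP fv fj] i|H].
    have := fv i; rewrite inE; case E: (f i) => [u|] //= ->; rewrite andbT.
    by apply/eqP => ij; move: fj; rewrite -ij E.
  split.
    apply/forallP => i; have := H i; rewrite inE; case: (f i) => // u /andP [].
    done.
  by have := H j; rewrite inE; case: (f j) => // u; rewrite eqxx.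
rewrite card_fam [RHS]big_mkcond /=; apply: eq_bigr => i _.
rewrite (card_optpred (fun u => (i != j) && (tag u == i)) true).
case: (i != j) => /=; last by rewrite card0.
rewrite -(card_cls i) add1n; congr (_.+1); exact: eq_card.
Qed.

Lemma count_supp (I : {set 'I_k}) :
  #|[set f : fn n | fvalid f && ([set i | hasc f i] == I)]| = \prod_(i in I) n i.
Proof.
pose F i := [pred o : option V | if o is Some u then (i \in I) && (tag u == i) else i \notin I].
have -> : #|[set f : fn n | fvalid f && ([set i | hasc f i] == I)]| =
          #|[pred f : fn n | [forall i, f i \in F i]]|.
  apply: eq_card => f; rewrite !inE; apply/andP/forallP => [[/forallP fv /eqP E] i|H].
    rewrite inE -E inE /hasc.
    by have := fv i; case: (f i) => [u|] //= ->.
  split.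
    apply/forallP => i; have := H i; rewrite inE; case: (f i) => // u /andP [].
    done.
  apply/eqP/setP => i; rewrite inE /hasc; have := H i; rewrite inE.
  by case: (f i) => [u /andP [->]|/negbTE ->].
rewrite card_fam [RHS]big_mkcond /=; apply: eq_bigr => i _.
rewrite (card_optpred (fun u => (i \in I) && (tag u == i)) (i \notin I)).
case: (i \in I) => /=; last by rewrite card0.
rewrite -(card_cls i); exact: eq_card.
Qed.

Lemma count_odd :
  #|[set f : fn n | fvalid f && odd (nc f)]| = \sum_(I : {set 'I_k} | odd #|I|) \prod_(i in I) n i.
Proof.
rewrite -sum1_card (partition_big (fun f : fn n => [set i | hasc f i]) (fun I => odd #|I|)).
  apply: eq_bigr => I oI; rewrite -count_supp -sum1_card; apply: eq_bigl => f.
  rewrite !inE; apply/andP/andP => [[/andP [fv _] ->]|[fv /eqP E]] //.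
  by rewrite /nc E oI fv.
by move=> f; rewrite inE => /andP [].
Qed.

Lemma count_valid :
  #|[set p : option 'I_k * fn n | valid p.1 p.2]| =
  \sum_(I : {set 'I_k} | odd #|I|) \prod_(i in I) n i
  + \sum_(j < k) \prod_(i < k | i != j) (n i).+1.
Proof.
rewrite (@eq_card _ _ [pred p : option 'I_k * fn n | valid p.1 p.2]); last first.
  by move=> p; rewrite !inE.
rewrite card_as_sum /= -(pair_bigA _ (fun q f => nat_of_bool (valid q f))) /= sum_option; congr (_ + _).
  rewrite -count_odd (@eq_card _ _ [pred f : fn n | valid None f]) ?card_as_sum //.
  by move=> f; rewrite !inE.
apply: eq_bigr => j _; rewrite -count_star.
rewrite (@eq_card _ _ [pred f : fn n | valid (Some j) f]) ?card_as_sum //.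
by move=> f; rewrite !inE.
Qed.

End Count.


Lemma third k (hk : 2 < k) (x y : 'I_k) : exists z : 'I_k, (z != x) && (z != y).
Proof.
have : 0 < #|~: [set x; y]|.
  have := cardsC [set x; y]; rewrite card_ord cards2.
  by case: (x != y) => /=; lia.
case/card_gt0P => z; rewrite !inE negb_or => H; by exists z.
Qed.

Lemma other_ord m (hm : 1 < m) (x : 'I_m) : exists y : 'I_m, y != x.
Proof.
have : 0 < #|[set~ x]| by rewrite cardsC1 card_ord; lia.
by case/card_gt0P => y; rewrite !inE => H; exists y.
Qed.

Section Inj.
Variables (k : nat) (n : 'I_k -> nat).
Hypothesis hk : 2 < k.
Hypothesis hn : forall i, 1 < n i.
Local Notation V := (cs_vertex n).

Lemma other_vtx (c : V) : exists u : V, tag u = tag c /\ u != c.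
Proof.
case: c => i x; have [y yx] := other_ord (hn i) x.
by exists (Tagged (fun i => 'I_(n i)) y); split => //; rewrite eq_Tagged.
Qed.

Lemma front_vtx (f : fn n) l : fvalid f -> exists w : V, tag w = l /\ fr f w.
Proof.
move=> /forallP /(_ l); case E: (f l) => [c|] /= H.
  by exists c; split; [exact/eqP | rewrite /fr /isc (eqP H) E eqxx orbT].
have hl : 0 < n l by apply: ltn_trans (hn l).
exists (Tagged (fun i => 'I_(n i)) (Ordinal hl)); split => //.
by rewrite /fr /hasc /= E.
Qed.

Lemma fr_char Q (f : fn n) b (u : V) : fvalid f ->
  fr f u = [exists w, (tag w != tag u) && ((u, w) \in G Q f b)].
Proof.
move=> fv; apply/idP/existsP => [fu|[w /andP [tw]]]; last first.
  by rewrite inE /gadj /= [tag u == _]eq_sym (negbTE tw) => /andP [_ /andP []].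
have [l [lu ql]] : exists l, l != tag u /\ qadj Q (tag u) l.
  case: Q => [q|] /=.
    case: (eqVneq (tag u) q) => [->|uq].
      by have [z /andP [z1 _]] := third hk q q; exists z.
    by exists q; rewrite eqxx orbT eq_sym.
  by have [z /andP [z1 _]] := third hk (tag u) (tag u); exists z.
have [w [tw fw]] := front_vtx l fv.
exists w; rewrite tw lu inE /gadj /= tw [tag u == l]eq_sym (negbTE lu) fu fw ql /= andbT.
by apply: contraNneq lu => E; rewrite -tw E.
Qed.

Lemma G_inj Q1 Q2 (f1 f2 : fn n) b1 b2 : fvalid f1 -> fvalid f2 ->
  G Q1 f1 b1 = G Q2 f2 b2 -> f1 = f2 /\ Q1 = Q2.
Proof.
move=> fv1 fv2 EG.
have Efr u : fr f1 u = fr f2 u by rewrite (fr_char Q1 b1 u fv1) (fr_char Q2 b2 u fv2) EG.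
have half (g1 g2 : fn n) i c : fvalid g1 -> fvalid g2 -> (forall u, fr g1 u = fr g2 u) ->
    g1 i = Some c -> g2 i = Some c.
  move=> gv1 gv2 Eg E1.
  have tc : tag c = i by move: (forallP gv1 i); rewrite E1 => /eqP.
  have [u [tu uc]] := other_vtx c.
  have fu : fr g2 u = false.
    rewrite -Eg /fr /isc /hasc tu tc E1 /=.
    by apply/negbTE; apply: contra uc => /eqP [->].
  have fc : fr g2 c by rewrite -Eg /fr /isc tc E1 eqxx orbT.
  move: fu; rewrite /fr /isc tu tc => /norP [h2 _]; rewrite negbK in h2.
  by move: fc; rewrite /fr /isc tc h2 /= => /eqP.
have Ef : f1 = f2.
  apply/ffunP => i; case E1: (f1 i) => [c|].
    by rewrite (half f1 f2 i c fv1 fv2 Efr E1).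
  case E2: (f2 i) => [d|] //.
  by rewrite (half f2 f1 i d fv2 fv1 (fun u => esym (Efr u)) E2) in E1.
subst f2; split => //.
have Eq a c : a != c -> qadj Q1 a c = qadj Q2 a c.
  move=> ac; have [w1 [t1 h1]] := front_vtx a fv1; have [w2 [t2 h2]] := front_vtx c fv1.
  move/setP: EG => /(_ (w1, w2)); rewrite !inE /gadj /= t1 t2 (negbTE ac) h1 h2 /=.
  have -> : w1 != w2 by apply: contraNneq ac => E; rewrite -t1 -t2 E.
  done.
clear EG Efr half.
case: Q1 Q2 Eq => [q1|] [q2|] //= Eq.
- case: (eqVneq q1 q2) => [->//|q12].
  have [z /andP [z1 z2]] := third hk q1 q2.
  have := Eq q1 z; rewrite eqxx (negbTE z2) eq_sym (negbTE q12) /=.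
  by move/(_ z1).
- have [a /andP [a1 _]] := third hk q1 q1.
  have [c /andP [c1 c2]] := third hk q1 a.
  have := Eq a c; rewrite (negbTE a1) (negbTE c1) eq_sym c2.
  by move/(_ isT).
- have [a /andP [a1 _]] := third hk q2 q2.
  have [c /andP [c1 c2]] := third hk q2 a.
  have := Eq a c; rewrite (negbTE a1) (negbTE c1) eq_sym c2.
  by move/(_ isT).
Qed.

End Inj.


Lemma G_ext k (n : 'I_k -> nat) Q (f : fn n) (b b' : {ffun 'I_k -> bool}) :
  (forall i, f i = None -> b i = b' i) -> G Q f b = G Q f b'.
Proof.
move=> H; apply/setP => -[x y]; rewrite !inE /gadj /intra /=.
case hx: (hasc f (tag x)) => //; rewrite H //.
by move: hx; rewrite /hasc => /negbT; rewrite negbK => /eqP.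
Qed.

Lemma clique_start k (n : 'I_k -> nat) r : clique_star n r = Gs (start n r).
Proof.
apply/setP => -[x y]; rewrite !inE /gadj /intra /fr /hasc /= !ffunE /=.
by case: (tag x == tag y).
Qed.

Lemma orbit_sub k (n : 'I_k -> nat) (s : state n) H : Pst s ->
  connect (@lc_step _) (Gs s) H -> exists2 t, Pst t & H = Gs t.
Proof.
move=> Ps /connectP [p]; elim: p s Ps => [|H' p IH] s Ps /=.
  by move=> _ ->; exists s.
case/andP => /existsP [v /eqP E] pth Hl.
apply: (IH (step s v) (P_step v Ps)) => //; by rewrite -LC_step -E.
Qed.

Theorem theorem8 (k : nat) (n : 'I_k -> nat) (r : 'I_k) :
  3 <= k -> (forall i, 2 <= n i) ->
  #|lc_orbit (clique_star n r)| =
    \sum_(I : {set 'I_k} | odd #|I|) \prod_(i in I) n i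
    + \sum_(j < k) \prod_(i < k | i != j) (n i).+1.
Proof.
move=> hk hn.
have hn0 i : 0 < n i by apply: ltn_trans (hn i).
pose h (p : option 'I_k * fn n) := Gs (p.1, p.2, [ffun i => canon p.1 p.2 i]).
have -> : lc_orbit (clique_star n r) = h @: [set p | valid p.1 p.2].
  apply/setP => H; rewrite inE; apply/idP/imsetP.
  - rewrite clique_start => /(orbit_sub (P_start n r)) [[[Q f] b] Pt ->].
    exists (Q, f); first by rewrite inE; case/andP: Pt.
    rewrite /h /Gs /=; apply: G_ext => i fi.
    by case/andP: Pt => _ /forallP /(_ i); rewrite /= fi eqxx ffunE => /eqP.
  - case=> -[Q f]; rewrite inE /= => vp ->; rewrite clique_start.
    apply: (reachC hn0); rewrite /Pst /= vp; apply/forallP => i; rewrite ffunE.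
    by rewrite eqxx implybT.
rewrite card_in_imset ?count_valid //.
move=> [Q1 f1] [Q2 f2]; rewrite !inE /= => /andP [fv1 _] /andP [fv2 _].
by rewrite /h /Gs /= => /(G_inj hk hn fv1 fv2) [-> ->].
Qed.
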